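(* Let $K$ be a field, $B$ the algebra of upper triangular $2\times2$ matrices over $K$, and $A=M_3(K)$, with $B$ embedded in $A$ via $\begin{pmatrix}x&y\\0&z\end{pmatrix}\mapsto\begin{pmatrix}x&0&0\\0&x&y\\0&0&z\end{pmatrix}$ (this is left multiplication $B\to\mathrm{End}(B_K)\cong M_3(K)$ in the ordered basis $e_{11},e_{12},e_{22}$). Then ${}_BA$ is free of rank $3$, $A\otimes_BA\cong A^3$ as $A$-$A$-bimodules (so $A\| B$ is H-separable, in particular D2), but $A\| B$ is not a Frobenius extension and there is no $B$-$B$-bimodule projection $A\to B$.
   Context: An algebra extension $A\| B$ is H-separable if $A\otimes_BA$ is isomorphic as an $A$-$A$-bimodule to a direct summand of a finite direct sum $A^n$. It is a Frobenius extension if $A_B$ is finitely generated projective and $A\cong\mathrm{Hom}(A_B,B_B)$ as $B$-$A$-bimodules. It is D2 if $A\otimes_BA$ is isomorphic to a direct summand of some $A^n$ both as $A$-$B$-bimodules and as $B$-$A$-bimodules. *)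

(* Defs.v *)
From HB Require Import structures.
From mathcomp Require Import all_boot all_order all_algebra.
Set Implicit Arguments. Unset Strict Implicit. Unset Printing Implicit Defensive.
Import GRing.Theory.
Local Open Scope ring_scope.

Definition iotaB (K : fieldType) (b : 'M[K]_2) : 'M[K]_3 :=
  b 0 0 *: (delta_mx 0 0 + delta_mx 1 1) + b 0 1 *: delta_mx 1 2
  + b 1 1 *: delta_mx 2 2.

Definition inB (K : fieldType) (a : 'M[K]_3) : Prop :=
  exists b : 'M[K]_2, b 1 0 = 0 /\ a = iotaB b.

Definition left_free_rank (K : fieldType) (n : nat) : Prop :=
  exists v : 'I_n -> 'M[K]_3,
    (forall x : 'M[K]_3, exists c : 'I_n -> 'M[K]_3,
        (forall i, inB (c i)) /\ x = \sum_i c i * v i) /\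
    (forall c : 'I_n -> 'M[K]_3, (forall i, inB (c i)) ->
        \sum_i c i * v i = 0 -> forall i, c i = 0).

Definition balanced (K : fieldType) (V : lmodType K)
    (f : 'M[K]_3 -> 'M[K]_3 -> V) : Prop :=
  (forall (k : K) x x' y, f (k *: x + x') y = k *: f x y + f x' y) /\
  (forall (k : K) x y y', f x (k *: y + y') = k *: f x y + f x y') /\
  (forall x b y, inB b -> f (x * b) y = f x (b * y)).

Definition is_tensorB (K : fieldType) (M : lmodType K)
    (t : 'M[K]_3 -> 'M[K]_3 -> M) : Prop :=
  balanced t /\
  forall (V : lmodType K) (f : 'M[K]_3 -> 'M[K]_3 -> V), balanced f ->
    exists g : M -> V,
      (forall (k : K) m m', g (k *: m + m') = k *: g m + g m') /\
      (forall x y, g (t x y) = f x y) /\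
      (forall g' : M -> V,
         (forall (k : K) m m', g' (k *: m + m') = k *: g' m + g' m') ->
         (forall x y, g' (t x y) = f x y) -> forall m, g' m = g m).

Definition tensor_iso_An (K : fieldType) (n : nat) : Prop :=
  exists t : 'M[K]_3 -> 'M[K]_3 -> {ffun 'I_n -> 'M[K]_3},
    is_tensorB t /\
    (forall c x y, t (c * x) y = [ffun i => c * t x y i]) /\
    (forall c x y, t x (y * c) = [ffun i => t x y i * c]).

(* Elements of Hom(A_B, B_B): right B-linear maps A -> B (B viewed inside A). *)
Definition rHom (K : fieldType) (f : 'M[K]_3 -> 'M[K]_3) : Prop :=
  (forall a, inB (f a)) /\
  (forall a a', f (a + a') = f a + f a') /\
  (forall a b, inB b -> f (a * b) = f a * b).

(* A_B is finitely generated projective: A_B is a direct summand of B^n_B,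
   i.e. there are a B-linear surjection B^n -> A, e_i |-> a i, and a B-linear
   section A -> B^n, x |-> (f i x)_i. *)
Definition right_fg_projective (K : fieldType) : Prop :=
  exists n (a : 'I_n -> 'M[K]_3) (f : 'I_n -> 'M[K]_3 -> 'M[K]_3),
    (forall i, rHom (f i)) /\ (forall x, x = \sum_i a i * f i x).

(* Frobenius extension: A_B f.g. projective and A ~= Hom(A_B,B_B) as B-A-bimodules,
   where (b . f . a)(x) = b * f (a * x). *)
Definition frobenius_ext (K : fieldType) : Prop :=
  right_fg_projective K /\
  exists phi : 'M[K]_3 -> ('M[K]_3 -> 'M[K]_3),
    (forall a, rHom (phi a)) /\
    (forall a a' x, phi (a + a') x = phi a x + phi a' x) /\
    (forall b a c x, inB b -> phi (b * a * c) x = b * phi a (c * x)) /\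
    (forall a a', (forall x, phi a x = phi a' x) -> a = a') /\
    (forall f, rHom f -> exists a, forall x, phi a x = f x).

Definition bimodule_projection (K : fieldType) (E : 'M[K]_3 -> 'M[K]_3) : Prop :=
  (forall a, inB (E a)) /\
  (forall a a', E (a + a') = E a + E a') /\
  (forall b a b', inB b -> inB b' -> E (b * a * b') = b * E a * b') /\
  (forall b, inB b -> E b = b).

(* Main.v *)
Require Import Defs.
From mathcomp Require Import all_boot all_order all_algebra ring.
Import GRing.Theory.
Set Implicit Arguments. Unset Strict Implicit. Unset Printing Implicit Defensive.
Local Open Scope ring_scope.

Lemma ord3 (i : 'I_3) : i = 0 \/ i = 1 \/ i = 2.
Proof. case: i => [[|[|[|m]]] H]; [left|right;left|right;right|by []]; exact: val_inj. Qed.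

Lemma sum3 (V : nmodType) (F : 'I_3 -> V) : \sum_(i < 3) F i = F 0 + F 1 + F 2.
Proof. rewrite !big_ord_recl big_ord0 addr0 addrA. by congr (F _ + F _ + F _); apply: val_inj. Qed.

Ltac oc a := case: (ord3 a) => [->|[->|->]].
Ltac mxs := rewrite -?mulmxE; apply/matrixP; let a := fresh "a" in let b := fresh "b" in
  intros a b; rewrite ?(mxE, sum3, summxE); oc a; oc b; rewrite /=; ring.

Definition J (K : fieldType) (p q r : K) : 'M[K]_3 :=
  p *: (delta_mx 0 0 + delta_mx 1 1) + q *: delta_mx 1 2 + r *: delta_mx 2 2.

Lemma inB_J (K : fieldType) (p q r : K) : inB (J p q r).
Proof.
exists (p *: delta_mx 0 0 + q *: delta_mx 0 1 + r *: delta_mx 1 1); split.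
  by rewrite !mxE /=; ring.
rewrite /iotaB /J !mxE /=; congr (_ *: _ + _ *: _ + _ *: _); ring.
Qed.

Lemma inB_E (K : fieldType) (a : 'M[K]_3) : inB a -> exists p q r, a = J p q r.
Proof. by case=> b [_ ->]; exists (b 0 0), (b 0 1), (b 1 1). Qed.

Lemma mulJ (K : fieldType) (p q r p' q' r' : K) :
  J p q r * J p' q' r' = J (p * p') (p * q' + q * r') (r * r').
Proof. rewrite /J; mxs. Qed.

Lemma J1 (K : fieldType) : (1 : 'M[K]_3) = J 1 0 1.
Proof. rewrite /J; mxs. Qed.

Lemma J0 (K : fieldType) : J 0 0 0 = 0 :> 'M[K]_3.
Proof. rewrite /J; mxs. Qed.

Lemma J_inj (K : fieldType) (p q r p' q' r' : K) :
  J p q r = J p' q' r' -> [/\ p = p', q = q' & r = r'].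
Proof.
move/matrixP=> H; have h1 := H 0 0; have h2 := H 1 2; have h3 := H 2 2.
rewrite /J !mxE /= in h1 h2 h3; split.
- by transitivity (p * (1 + 0) + q * 0 + r * 0); [ring| rewrite h1; ring].
- by transitivity (p * (0 + 0) + q * 1 + r * 0); [ring| rewrite h2; ring].
- by transitivity (p * (0 + 0) + q * 0 + r * 1); [ring| rewrite h3; ring].
Qed.
Lemma sumE (K : fieldType) (c : 'I_3 -> 'M[K]_3) a b :
  (\sum_j c j * (delta_mx 0 j + delta_mx 2 j)) a b = c b a 0 + c b a 2.
Proof. oc a; oc b; rewrite !(mxE, sum3, summxE) /=; ring. Qed.

Lemma part1 (K : fieldType) : left_free_rank K 3.
Proof.
exists (fun i => delta_mx 0 i + delta_mx 2 i); split.
  move=> x; exists (fun i => J (x 0 i) (x 1 i) (x 2 i)); split; first by move=> i; apply: inB_J.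
  rewrite /J; mxs.
move=> c Hc Hs i.
have key : forall a, c i a 0 + c i a 2 = 0 by move=> a; rewrite -sumE Hs mxE.
have [p [q [r e]]] := inB_E (Hc i); rewrite e in key *.
have k0 := key 0; have k1 := key 1; have k2 := key 2.
rewrite /J !mxE /= in k0 k1 k2.
have -> : p = 0 by transitivity (p * (1 + 0) + q * 0 + r * 0 + (p * (0 + 0) + q * 0 + r * 0)); [ring | rewrite k0].
have -> : q = 0 by transitivity (p * (0 + 0) + q * 0 + r * 0 + (p * (0 + 0) + q * 1 + r * 0)); [ring | rewrite k1].
have -> : r = 0 by transitivity (p * (0 + 0) + q * 0 + r * 0 + (p * (0 + 0) + q * 0 + r * 1)); [ring | rewrite k2].
exact: J0.
Qed.

Lemma part4 (K : fieldType) : ~ (exists E : 'M[K]_3 -> 'M[K]_3, bimodule_projection E).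
Proof.
case=> E [EB [_ [Ebim Eid]]].
have h1 := Ebim (J 0 0 1) (delta_mx 2 1) (J 1 0 0) (inB_J _ _ _) (inB_J _ _ _).
have e : J 0 0 1 * delta_mx 2 1 * J 1 0 0 = delta_mx 2 1 :> 'M[K]_3 by rewrite /J; mxs.
rewrite e in h1.
have [p [q [r ew]]] := inB_E (EB (delta_mx 2 1)).
have i1 : inB (1 : 'M[K]_3) by rewrite J1; apply: inB_J.
have h2 := Ebim 1 (delta_mx 2 1) (J 0 1 0) i1 (inB_J _ _ _).
have e2 : 1 * delta_mx 2 1 * J 0 1 0 = J 0 0 1 :> 'M[K]_3 by rewrite /J; mxs.
rewrite e2 (Eid (J 0 0 1) (inB_J _ _ _)) ew J1 !mulJ in h2.
case: (J_inj h2) => _ _ h3.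
move/eqP: (@oner_neq0 K); apply; rewrite {1}h3; ring.
Qed.

Lemma part3 (K : fieldType) : ~ frobenius_ext K.
Proof.
case=> _ [phi [Hr [Hadd [Hbim [Hinj _]]]]].
have key : forall x, J 0 0 1 * phi 1 x = 0.
  move=> x; have [fB [fadd fmul]] := Hr 1.
  have e1 := fmul x _ (inB_J 0 0 1).
  have e2 : x * J 0 0 1 = (x * delta_mx 2 1) * J 0 1 0.
    by rewrite -mulrA; congr (x * _); rewrite /J; mxs.
  rewrite e2 (fmul _ _ (inB_J _ _ _)) in e1.
  have [p [q [r ew]]] := inB_E (fB (x * delta_mx 2 1)).
  have [p' [q' [r' ex]]] := inB_E (fB x).
  rewrite ew ex !mulJ in e1; rewrite ex mulJ.
  case: (J_inj e1) => _ _ h3.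
  have -> : r' = 0 by transitivity (r' * 1); [ring | rewrite -h3; ring].
  by rewrite !mul0r !mulr0 addr0 J0.
have p0 : forall x, phi 0 x = 0.
  move=> x; have := Hadd 0 0 x; rewrite addr0 => h.
  by apply: (@addrI _ (phi 0 x)); rewrite addr0 -h.
have : J 0 0 1 = 0 :> 'M[K]_3.
  apply: Hinj => x; rewrite p0 -[J 0 0 1]mulr1 -[J 0 0 1 * 1]mulr1.
  have i1 : inB (1 : 'M[K]_3) by rewrite J1; apply: inB_J.
  by rewrite (Hbim _ _ _ _ (inB_J _ _ _)) mul1r key.
move/matrixP/(_ 2 2); rewrite /J !mxE /= => h.
move/eqP: (@oner_neq0 K); apply; transitivity (0 * (0 + 0) + 0 * 0 + 1 * 1 : K); first ring.
by rewrite h.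
Qed.
Lemma dl (K : fieldType) (p a b q : 'I_3) (M : 'M[K]_3) :
  delta_mx p a * M * delta_mx b q = M a b *: delta_mx p q.
Proof. (apply/matrixP => r s; oc a; oc b; rewrite !(mxE, sum3) /= ?andbT ?andbF;
  case: (r == p); case: (s == q); rewrite /=; ring). Qed.

Definition P (K : fieldType) (i : 'I_3) : 'M[K]_3 :=
  if i == 0 then delta_mx 0 0 else if i == 1 then delta_mx 1 0
  else delta_mx 1 1 + delta_mx 2 2.
Definition tt (K : fieldType) (x y : 'M[K]_3) : {ffun 'I_3 -> 'M[K]_3} :=
  [ffun i => x * P K i * y].
Definition al (i : 'I_3) : 'I_3 := if i == 0 then 0 else 1.
Definition be (i : 'I_3) : 'I_3 := if i == 2 then 1 else 0.

Lemma P_comm (K : fieldType) (b : 'M[K]_3) i : inB b -> b * P K i = P K i * b.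
Proof. (case/inB_E => p [q [r ->]]; oc i; rewrite /P /J /=; mxs). Qed.

Lemma tt_basis (K : fieldType) p a b q :
  tt (delta_mx p a) (delta_mx b q) = [ffun i => P K i a b *: delta_mx p q].
Proof. by apply/ffunP => i; rewrite !ffunE dl. Qed.

Lemma lin0 (K : fieldType) (U V : lmodType K) (h : U -> V) :
  (forall k u u', h (k *: u + u') = k *: h u + h u') -> h 0 = 0.
Proof.
move=> hl; have := hl 1 0 0; rewrite scaler0 addr0 scale1r => H.
by apply: (@addrI _ (h 0)); rewrite addr0 -H.
Qed.

Lemma linD (K : fieldType) (U V : lmodType K) (h : U -> V) :
  (forall k u u', h (k *: u + u') = k *: h u + h u') -> {morph h : u v / u + v}.
Proof. by move=> hl u v; have := hl 1 u v; rewrite !scale1r. Qed.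

Lemma linZ' (K : fieldType) (U V : lmodType K) (h : U -> V) :
  (forall k u u', h (k *: u + u') = k *: h u + h u') -> forall k u, h (k *: u) = k *: h u.
Proof. by move=> hl k u; rewrite -[k *: u]addr0 hl (lin0 hl) addr0. Qed.

Lemma linS (K : fieldType) (U V : lmodType K) (h : U -> V) :
  (forall k u u', h (k *: u + u') = k *: h u + h u') ->
  forall I (r : seq I) (P : pred I) F, h (\sum_(i <- r | P i) F i) = \sum_(i <- r | P i) h (F i).
Proof. by move=> hl I r P0 F; apply: (big_morph h (linD hl) (lin0 hl)). Qed.

Lemma lin_dsum (K : fieldType) (U V : lmodType K) (h : U -> V) :
  (forall k u u', h (k *: u + u') = k *: h u + h u') ->
  forall (c : 'I_3 -> 'I_3 -> K) X,
  h (\sum_p \sum_a c p a *: X p a) = \sum_p \sum_a c p a *: h (X p a).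
Proof.
move=> hl c X; rewrite linS //; apply: eq_bigr => p _.
rewrite linS //; apply: eq_bigr => a _; exact: linZ'.
Qed.

Lemma lin_tsum (K : fieldType) (U V : lmodType K) (h : U -> V) :
  (forall k u u', h (k *: u + u') = k *: h u + h u') ->
  forall (c : 'I_3 -> 'I_3 -> 'I_3 -> K) X,
  h (\sum_i \sum_p \sum_a c i p a *: X i p a) = \sum_i \sum_p \sum_a c i p a *: h (X i p a).
Proof.
move=> hl c X; rewrite linS //; apply: eq_bigr => i _; exact: lin_dsum.
Qed.

Lemma expand (K : fieldType) (V : lmodType K) (h : 'M[K]_3 -> 'M[K]_3 -> V) :
  (forall (k : K) x x' y, h (k *: x + x') y = k *: h x y + h x' y) ->
  (forall (k : K) x y y', h x (k *: y + y') = k *: h x y + h x y') ->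
  forall x y, h x y = \sum_p \sum_a \sum_b \sum_q
     (x p a * y b q) *: h (delta_mx p a) (delta_mx b q).
Proof.
move=> h1 h2 x y.
have -> : h x y = \sum_p \sum_a x p a *: h (delta_mx p a) y.
  by rewrite {1}(matrix_sum_delta x); exact: (lin_dsum (h := fun u => h u y)).
apply: eq_bigr => p _; apply: eq_bigr => a _.
have -> : h (delta_mx p a) y = \sum_b \sum_q y b q *: h (delta_mx p a) (delta_mx b q).
  by rewrite {1}(matrix_sum_delta y); exact: (lin_dsum (h := fun v => h (delta_mx p a) v)).
rewrite scaler_sumr; apply: eq_bigr => b _; rewrite scaler_sumr; apply: eq_bigr => q _.
by rewrite scalerA.
Qed.

Definition gg (K : fieldType) (V : lmodType K) (f : 'M[K]_3 -> 'M[K]_3 -> V)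
  (m : {ffun 'I_3 -> 'M[K]_3}) : V :=
  \sum_i \sum_p \sum_q m i p q *: f (delta_mx p (al i)) (delta_mx (be i) q).

Lemma gg_lin (K : fieldType) (V : lmodType K) (f : 'M[K]_3 -> 'M[K]_3 -> V) k m m' :
  gg f (k *: m + m') = k *: gg f m + gg f m'.
Proof.
rewrite /gg scaler_sumr -big_split; apply: eq_bigr => i _.
rewrite scaler_sumr -big_split; apply: eq_bigr => p _.
rewrite scaler_sumr -big_split; apply: eq_bigr => q _.
by rewrite !ffunE !mxE scalerDl scalerA.
Qed.

Lemma gg_ffun (K : fieldType) (V : lmodType K) (f : 'M[K]_3 -> 'M[K]_3 -> V) c p q :
  gg f [ffun i => c i *: delta_mx p q] = \sum_i c i *: f (delta_mx p (al i)) (delta_mx (be i) q).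
Proof.
rewrite /gg; apply: eq_bigr => i _; oc p; oc q; rewrite !sum3 !ffunE !mxE /=;
  by rewrite !mulr0 !mulr1 !scale0r ?addr0 ?add0r.
Qed.

Lemma fz1 (K : fieldType) (V : lmodType K) (f : 'M[K]_3 -> 'M[K]_3 -> V) :
  balanced f -> forall x b y, inB b -> x * b = 0 -> f x (b * y) = 0.
Proof.
case=> h1 [h2 h3] x b y Bb e; rewrite -h3 // e.
exact: (lin0 (h := fun u => f u y)).
Qed.

Lemma fz2 (K : fieldType) (V : lmodType K) (f : 'M[K]_3 -> 'M[K]_3 -> V) :
  balanced f -> forall x b y, inB b -> b * y = 0 -> f (x * b) y = 0.
Proof.
case=> h1 [h2 h3] x b y Bb e; rewrite h3 // e.
exact: (lin0 (h := fun u => f x u)).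
Qed.

Lemma basis_eq (K : fieldType) (V : lmodType K) (f : 'M[K]_3 -> 'M[K]_3 -> V) :
  balanced f -> forall p a b q,
  \sum_i P K i a b *: f (delta_mx p (al i)) (delta_mx (be i) q) =
  f (delta_mx p a) (delta_mx b q).
Proof.
move=> fb p a b q; have [_ [_ h3]] := fb.
rewrite sum3 /al /be /=.
oc a; oc b; rewrite /P /= !mxE /= ?mulr0 ?mulr1 ?addr0 ?add0r !scale0r ?scale1r ?addr0 ?add0r //.
- rewrite (_ : delta_mx 1 q = J 0 1 0 * delta_mx 2 q); last by oc q; rewrite /J; mxs.
  by rewrite (fz1 fb _ (inB_J _ _ _)) //; oc p; rewrite /J; mxs.
- rewrite (_ : delta_mx 2 q = J 0 0 1 * delta_mx 2 q); last by oc q; rewrite /J; mxs.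
  by rewrite (fz1 fb _ (inB_J _ _ _)) //; oc p; rewrite /J; mxs.
- rewrite (_ : delta_mx 2 q = J 0 0 1 * delta_mx 2 q); last by oc q; rewrite /J; mxs.
  by rewrite (fz1 fb _ (inB_J _ _ _)) //; oc p; rewrite /J; mxs.
- rewrite (_ : delta_mx p 2 = delta_mx p 2 * J 0 0 1); last by oc p; rewrite /J; mxs.
  by rewrite (fz2 fb _ (inB_J _ _ _)) //; oc q; rewrite /J; mxs.
- rewrite (_ : delta_mx p 2 = delta_mx p 2 * J 0 0 1); last by oc p; rewrite /J; mxs.
  by rewrite (fz2 fb _ (inB_J _ _ _)) //; oc q; rewrite /J; mxs.
- rewrite (_ : delta_mx p 2 = delta_mx p 1 * J 0 1 0); last by oc p; rewrite /J; mxs.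
  rewrite (h3 _ _ _ (inB_J _ _ _)); congr f; oc q; rewrite /J; mxs.
Qed.

Lemma tt_lin1 (K : fieldType) (k : K) x x' y :
  tt (k *: x + x') y = k *: tt x y + tt x' y.
Proof. by apply/ffunP => i; rewrite !ffunE !mulrDl -!scalerAl. Qed.

Lemma tt_lin2 (K : fieldType) (k : K) x y y' :
  tt x (k *: y + y') = k *: tt x y + tt x y'.
Proof. by apply/ffunP => i; rewrite !ffunE mulrDr -!scalerAr. Qed.

Lemma decomp (K : fieldType) (m : {ffun 'I_3 -> 'M[K]_3}) :
  m = \sum_i \sum_p \sum_q m i p q *: tt (delta_mx p (al i)) (delta_mx (be i) q).
Proof.
under eq_bigr => i _ do under eq_bigr => p _ do under eq_bigr => q _ do rewrite tt_basis.
apply/ffunP => j; apply/matrixP => r s.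
rewrite !(sum3, ffunE, sum_ffunE, summxE) /P /al /be /= !mxE.
oc j; oc r; oc s; rewrite /= ?mxE /=; ring.
Qed.

Lemma part2 (K : fieldType) : tensor_iso_An K 3.
Proof.
exists (@tt K); split; [split|split].
- split; [exact: tt_lin1 | split; [exact: tt_lin2|]].
  move=> x b y Bb; apply/ffunP => i; rewrite !ffunE.
  by rewrite -(mulrA x b) (P_comm _ Bb) !mulrA.
- move=> V f fb; exists (gg f); split; first exact: gg_lin.
  have [fb1 [fb2 _]] := fb.
  split.
    move=> x y.
    have E1 := expand (h := fun x y => gg f (tt x y))
      (fun k x x' y => etrans (congr1 (gg f) (tt_lin1 k x x' y)) (gg_lin _ _ _ _))
      (fun k x y y' => etrans (congr1 (gg f) (tt_lin2 k x y y')) (gg_lin _ _ _ _)) x y.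
    rewrite /= in E1; rewrite E1 (expand fb1 fb2 x y).
    apply: eq_bigr => p _; apply: eq_bigr => a _; apply: eq_bigr => b _; apply: eq_bigr => q _.
    by rewrite tt_basis gg_ffun basis_eq.
  move=> g' hg' Hg' m.
  rewrite {1}(decomp m) lin_tsum //.
  rewrite /gg; apply: eq_bigr => i _; apply: eq_bigr => p _; apply: eq_bigr => q _.
  by rewrite Hg'.
- by move=> c x y; apply/ffunP => i; rewrite !ffunE !mulrA.
- by move=> c x y; apply/ffunP => i; rewrite !ffunE !mulrA.
Qed.

Theorem mainTheorem12 (K : fieldType) :
  left_free_rank K 3 /\
  tensor_iso_An K 3 /\
  ~ frobenius_ext K /\
  ~ (exists E : 'M[K]_3 -> 'M[K]_3, bimodule_projection E).
Proof.
split; first exact: part1.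
split; first exact: part2.
split; [exact: part3 | exact: part4].
Qed.
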